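(* Let $p$ be a prime and $k$ a positive integer. (1) If $p>2$, there are exactly two conjugacy classes of involutions in $\operatorname{Hol}(\mathbb{Z}/p^k\mathbb{Z})$, with representatives $\lambda(1,0)$ and $\lambda(-1,0)$. (2) There are exactly two conjugacy classes of involutions in $\operatorname{Hol}(\mathbb{Z}/2\mathbb{Z})$, with representatives $\lambda(1,0),\lambda(1,1)$. (3) There are exactly four conjugacy classes of involutions in $\operatorname{Hol}(\mathbb{Z}/4\mathbb{Z})$, with representatives $\lambda(1,0),\lambda(1,2),\lambda(-1,0),\lambda(-1,1)$. (4) For $k\ge3$ there are exactly six conjugacy classes of involutions in $\operatorname{Hol}(\mathbb{Z}/2^k\mathbb{Z})$, with representatives $\lambda(1,0),\lambda(1,2^{k-1}),\lambda(-1,0),\lambda(-1,1),\lambda(2^{k-1}-1,0),\lambda(2^{k-1}+1,0)$. Consequently, for every positive integer $m$, the number of conjugacy classes of involutions in $\operatorname{Hol}(\mathbb{Z}/m\mathbb{Z})$ is $\min(6,2\nu_2(m))\cdot2^{|\{p>2\text{ prime}:p\mid m\}|}$.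
   Context: $\operatorname{Hol}(\mathbb{Z}/m\mathbb{Z})$ is the group of permutations $\lambda(a,b):x\mapsto ax+b$ of $\mathbb{Z}/m\mathbb{Z}$ with $a$ a unit mod $m$ and $b\in\mathbb{Z}/m\mathbb{Z}$. An involution of a group is an element $g$ with $g^2=1$ (the identity counts as an involution). $\nu_2(m)$ is the exponent of $2$ in $m$. *)

(* Defs.v *)
From mathcomp Require Import all_boot all_fingroup.
Set Implicit Arguments. Unset Strict Implicit. Unset Printing Implicit Defensive.

Definition hol_fun (m a b : nat) (x : 'I_m) : 'I_m :=
  Ordinal (ltn_pmod (a * x + b) (leq_ltn_trans (leq0n x) (ltn_ord x))).
Arguments hol_fun : clear implicits.

(* lambda(a,b) as a permutation of Z/mZ (meaningful when a is a unit mod m;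
   defaults to the identity if the map is not injective). *)
Definition lam (m a b : nat) : {perm 'I_m} :=
  insubd (1%g : {perm 'I_m}) [ffun x : 'I_m => hol_fun m a b x].

Definition Hol (m : nat) : {set {perm 'I_m}} :=
  [set s | [exists a : 'I_m, exists b : 'I_m, coprime a m && (s == lam m a b)]].

(* Involutions of Hol(Z/mZ) (identity included). *)
Definition involutions (m : nat) : {set {perm 'I_m}} :=
  [set s in Hol m | (s ^+ 2 == 1)%g].

Definition inv_classes (m : nat) : {set {set {perm 'I_m}}} :=
  [set (s ^: Hol m)%g | s in involutions m].

Definition two_factor (v : nat) : nat := if v == 0 then 1 else minn 6 (2 * v).

(* Main.v *)
Require Import Defs.
From mathcomp Require Import all_boot all_fingroup zify ring.
Set Implicit Arguments. Unset Strict Implicit. Unset Printing Implicit Defensive.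

Lemma hol_funE m a b x : nat_of_ord (hol_fun m a b x) = (a * x + b) %% m.
Proof. by []. Qed.


Lemma coprime_cancel m a x y : coprime a m -> a * x = a * y %[mod m] -> x = y %[mod m].
Proof.
move=> co.
wlog le: x y / y <= x.
  move=> W; case: (leqP y x) => h; first exact: W.
  move=> e; symmetry; apply: W; [exact: ltnW | by []].
move/eqP; rewrite eqn_mod_dvd ?leq_mul2l ?le ?orbT // -mulnBr.
rewrite Gauss_dvdr; last by rewrite coprime_sym.
by rewrite -eqn_mod_dvd // => /eqP.
Qed.

Lemma lamE m a b x : coprime a m -> lam m a b x = hol_fun m a b x.
Proof.
move=> co; rewrite -pvalE /lam insubdK ?ffunE //.
apply/injectiveP => y z; rewrite !ffunE => /(congr1 (@nat_of_ord m)); rewrite !hol_funE.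
move/eqP; rewrite eqn_modDr => /eqP /(coprime_cancel co).
by rewrite !modn_small // => /val_inj.
Qed.

Lemma lamEv m a b x : coprime a m -> nat_of_ord (lam m a b x) = (a * x + b) %% m.
Proof. by move=> co; rewrite lamE. Qed.

Lemma lam_mod m a b : lam m a b = lam m (a %% m) (b %% m).
Proof.
rewrite /lam; congr insubd; apply/ffunP => x; rewrite !ffunE; apply/val_inj => /=.
by rewrite modnDmr; symmetry; rewrite -modnDml modnMml modnDml.
Qed.

Lemma lam_mul m a b c d : coprime a m -> coprime c m ->
  (lam m a b * lam m c d)%g = lam m (c * a) (c * b + d).
Proof.
move=> ca cc; apply/permP => x; apply/val_inj => /=.
rewrite /= permM lamEv // lamEv // lamEv ?coprimeMl ?ca ?cc //.
by rewrite -modnDml modnMmr modnDml mulnDr mulnA addnA.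
Qed.

Lemma lam1 m : lam m 1 0 = 1%g.
Proof.
apply/permP => x; apply/val_inj => /=; rewrite perm1 lamEv ?coprime1n //.
by rewrite mul1n addn0 modn_small.
Qed.

Lemma lam_inj m a b c d : 0 < m -> coprime a m -> coprime c m ->
  lam m a b = lam m c d -> a = c %[mod m] /\ b = d %[mod m].
Proof.
move=> m0 ca cc e.
case: (ltngtP m 1) => [|m1|m1]; first by rewrite ltnNge m0.
  have e0 := congr1 (fun s : {perm 'I_m} => val (s (Ordinal m0))) e.
  have e1 := congr1 (fun s : {perm 'I_m} => val (s (Ordinal m1))) e.
  move: e0 e1 => /=; rewrite !lamEv //= !muln0 !muln1 !add0n => e0 e1.
  split=> //; apply/eqP; rewrite -(eqn_modDr b); apply/eqP.
  by rewrite -[in RHS]modnDmr e0 modnDmr -e1.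
by subst m; rewrite !modn1.
Qed.

Lemma Hol_lam m a b : 0 < m -> coprime a m -> lam m a b \in Hol m.
Proof.
move=> m0 co; rewrite inE; apply/existsP; exists (Ordinal (ltn_pmod a m0)).
apply/existsP; exists (Ordinal (ltn_pmod b m0)).
by rewrite /= coprime_modl co -lam_mod eqxx.
Qed.

Lemma HolP m s : s \in Hol m ->
  exists a b : 'I_m, coprime a m /\ s = lam m a b.
Proof.
by rewrite inE => /existsP [a /existsP [b /andP [co /eqP ->]]]; exists a, b.
Qed.

Lemma Hol_gs m : 0 < m -> group_set (Hol m).
Proof.
move=> m0; apply/group_setP; split; first by rewrite -lam1 Hol_lam ?coprime1n.
move=> x y /HolP [a [b [ca ->]]] /HolP [c [d [cc ->]]].
by rewrite lam_mul // Hol_lam // coprimeMl cc ca.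
Qed.

Lemma class_intro m a b b' c d : 0 < m -> coprime a m -> coprime c m ->
  a * d + b' = c * b + d %[mod m] -> lam m a b' \in (lam m a b ^: Hol m)%g.
Proof.
move=> m0 ca cc e; apply/imsetP; exists (lam m c d); first exact: Hol_lam.
apply: (mulgI (lam m c d)); rewrite conjgE mulKVg lam_mul // lam_mul //.
by rewrite lam_mod [in RHS]lam_mod mulnC e.
Qed.

Lemma class_elim m a b a' b' : 0 < m -> coprime a m -> coprime a' m ->
  lam m a' b' \in (lam m a b ^: Hol m)%g ->
  a' = a %[mod m] /\ exists c d, coprime c m /\ a * d + b' = c * b + d %[mod m].
Proof.
move=> m0 ca ca' /imsetP [y /HolP [c [d [cc ->]]]] e.
have := congr1 (fun z => lam m c d * z)%g e.
rewrite conjgE mulKVg lam_mul // lam_mul // => /lam_inj [] //; try by rewrite coprimeMl ?ca ?ca' ?cc.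
rewrite mulnC => /(coprime_cancel cc) e1 e2; split=> //.
exists c, d; split=> //.
by rewrite -modnDml -modnMml -e1 modnMml modnDml.
Qed.

Lemma lam_sqr m a b : 0 < m -> coprime a m ->
  ((lam m a b ^+ 2)%g == 1%g) = (a * a == 1 %[mod m]) && (a * b + b == 0 %[mod m]).
Proof.
move=> m0 ca; rewrite expgS expg1 lam_mul // -lam1.
apply/eqP/andP => [e|[/eqP e1 /eqP e2]].
  have [] := lam_inj m0 _ (coprime1n m) e; first by rewrite coprimeMl ca.
  by move=> -> ->.
by rewrite lam_mod e1 e2 -lam_mod.
Qed.

Definition IP m : {set 'I_m * 'I_m} :=
  [set p : 'I_m * 'I_m | [&& coprime p.1 m, p.1 * p.1 == 1 %[mod m] & p.1 * p.2 + p.2 == 0 %[mod m]]].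
Definition ER m : rel ('I_m * 'I_m) := fun p q =>
  (q.1 == p.1) && [exists c : 'I_m, exists d : 'I_m,
     coprime c m && (p.1 * d + q.2 == c * p.2 + d %[mod m])].
Arguments IP : clear implicits.
Arguments ER : clear implicits.
Definition cnt (T : finType) (A : {set T}) (E : rel T) :=
  #|[set [set y in A | E x y] | x in A]|.

Lemma ERP m (p q : 'I_m * 'I_m) : 0 < m -> coprime p.1 m -> coprime q.1 m ->
  (lam m q.1 q.2 \in (lam m p.1 p.2 ^: Hol m)%g) = ER m p q.
Proof.
move=> m0 cp cq; apply/idP/andP.
  move/class_elim => [] // e [c [d [cc e2]]].
  split; first by apply/eqP/val_inj; move: e; rewrite !modn_small.
  apply/existsP; exists (Ordinal (ltn_pmod c m0)); apply/existsP.
  exists (Ordinal (ltn_pmod d m0)); rewrite /= coprime_modl cc /=.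
  rewrite -modnDml modnMmr modnDml e2; apply/eqP.
  by rewrite modnDmr -[in RHS]modnDml modnMml modnDml.
move=> [/eqP e /existsP [c /existsP [d /andP [cc /eqP e2]]]].
by rewrite e; apply: (class_intro m0 cp cc e2).
Qed.

Lemma img_inj (T U : finType) (f : T -> U) (D : {set T}) (A B : {set T}) :
  {in D &, injective f} -> A \subset D -> B \subset D -> f @: A = f @: B -> A = B.
Proof.
move=> fi sA sB e; apply/setP => x; apply/idP/idP => h.
  have: f x \in f @: B by rewrite -e imset_f.
  case/imsetP => y yB /fi -> //; [exact: (subsetP sA) | exact: (subsetP sB)].
have: f x \in f @: A by rewrite e imset_f.
case/imsetP => y yA /fi -> //; [exact: (subsetP sB) | exact: (subsetP sA)].
Qed.

Lemma inv_classes_cnt m : 0 < m -> #|inv_classes m| = cnt (IP m) (ER m).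
Proof.
move=> m0; pose G := Group (Hol_gs m0).
pose Lf := fun p : 'I_m * 'I_m => lam m p.1 p.2.
have Lfi : {in IP m &, injective Lf}.
  move=> [a b] [c d]; rewrite !inE /Lf /= => /and3P [ca _ _] /and3P [cc _ _].
  case/lam_inj => //; rewrite !modn_small // => e1 e2.
  by congr pair; apply/val_inj.
have invE : involutions m = Lf @: IP m.
  apply/setP => s; rewrite inE; apply/andP/imsetP.
    move=> [/HolP [a [b [ca ->]]]]; rewrite lam_sqr // => h.
    by exists (a, b) => //; rewrite inE /= ca.
  move=> [[a b]]; rewrite inE /Lf /= => /and3P [ca h1 h2] ->.
  by rewrite Hol_lam // lam_sqr // h1 h2.
have clE : {in IP m, forall p, (Lf p ^: Hol m)%g = Lf @: [set q in IP m | ER m p q]}.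
  move=> p pI; have cp : coprime p.1 m by move: pI; rewrite inE => /and3P [].
  apply/setP => z; apply/idP/imsetP.
    move=> zc; have zG : z \in G.
      case/imsetP: zc => y yG ->; apply: groupJ => //.
      by rewrite /= /Lf Hol_lam.
    have zi : z \in involutions m.
      rewrite inE zG /=; case/imsetP: zc => y yG ->.
      rewrite -conjXg; move: pI; rewrite inE => /and3P [_ h1 h2].
      by rewrite (eqP (_ : (Lf p ^+ 2 == 1)%g)) ?conj1g // lam_sqr // h1 h2.
    move: zi; rewrite invE => /imsetP [q qI zq]; exists q => //.
    rewrite inE qI /= -ERP //; first by move: zc; rewrite zq.
    by move: qI; rewrite inE => /and3P [].
  move=> [q]; rewrite inE => /andP [qI e] ->.
  rewrite /Lf ERP //; by move: qI; rewrite inE => /and3P [].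
rewrite /inv_classes invE -imset_comp.
rewrite (eq_in_imset (g := fun p => Lf @: [set q in IP m | ER m p q])); last first.
  by move=> p pI; rewrite /= clE.
rewrite (imset_comp (fun A : {set 'I_m * 'I_m} => Lf @: A) (fun p => [set q in IP m | ER m p q])).
rewrite card_in_imset //.
move=> A B /imsetP [p _ ->] /imsetP [q _ ->].
by apply: img_inj Lfi _ _; apply/subsetP => x; rewrite inE => /andP [].
Qed.

Lemma setX_inj (T1 T2 : finType) (A1 B1 : {set T1}) (A2 B2 : {set T2}) x1 x2 y1 y2 :
  x1 \in A1 -> x2 \in A2 -> y1 \in B1 -> y2 \in B2 ->
  setX A1 A2 = setX B1 B2 -> A1 = B1 /\ A2 = B2.
Proof.
move=> xa1 xa2 yb1 yb2 e; split; apply/setP => z; apply/idP/idP => h.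
- by have := in_setX A1 A2 z x2; rewrite e h xa2 inE => /andP [].
- by have := in_setX B1 B2 z y2; rewrite -e h yb2 inE => /andP [].
- by have := in_setX A1 A2 x1 z; rewrite e h xa1 inE => /andP [].
- by have := in_setX B1 B2 y1 z; rewrite -e h yb1 inE => /andP [].
Qed.

Lemma cnt_prod (T T1 T2 : finType) (A : {set T}) (A1 : {set T1}) (A2 : {set T2})
  (E : rel T) (E1 : rel T1) (E2 : rel T2) (h : T -> T1 * T2) :
  {in A &, injective h} -> h @: A = setX A1 A2 ->
  {in A1, forall x, E1 x x} -> {in A2, forall x, E2 x x} ->
  {in A &, forall x y, E x y = E1 (h x).1 (h y).1 && E2 (h x).2 (h y).2} ->
  cnt A E = cnt A1 E1 * cnt A2 E2.
Proof.
move=> hi hA r1 r2 hE.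
pose C x := [set y in A | E x y]; pose C1 x := [set y in A1 | E1 x y].
pose C2 x := [set y in A2 | E2 x y].
rewrite /cnt -/C -/C1 -/C2.
rewrite -(card_in_imset (f := fun S : {set T} => h @: S)); last first.
  move=> S S' /imsetP [x _ ->] /imsetP [y _ ->].
  by apply: img_inj hi _ _; apply/subsetP => z; rewrite inE => /andP [].
rewrite -imset_comp.
rewrite (eq_in_imset (g := fun x => setX (C1 (h x).1) (C2 (h x).2))); last first.
  move=> x xA /=; apply/setP => u; apply/imsetP/idP.
    move=> [y]; rewrite inE => /andP [yA exy] ->.
    have : h y \in setX A1 A2 by rewrite -hA imset_f.
    by rewrite !inE => /andP [-> ->] /=; rewrite -hE.
  rewrite !inE => /andP [/andP [u1 e1] /andP [u2 e2]].
  have : u \in setX A1 A2 by rewrite inE u1 u2.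
  rewrite -hA => /imsetP [y yA uy]; exists y => //.
  by rewrite inE yA hE // -uy e1 e2.
rewrite (imset_comp (fun u => setX (C1 u.1) (C2 u.2)) h) hA.
rewrite (imset_comp (fun S : {set T1} * {set T2} => setX S.1 S.2) (fun u => (C1 u.1, C2 u.2))).
have -> : [set (C1 u.1, C2 u.2) | u in setX A1 A2] =
          setX [set C1 x | x in A1] [set C2 x | x in A2].
  apply/setP => [[S1 S2]]; apply/imsetP/idP.
    move=> [[u1 u2]]; rewrite inE => /andP [u1A u2A] /= ->.
    by rewrite inE /= !imset_f.
  rewrite inE /= => /andP [/imsetP [u1 u1A ->] /imsetP [u2 u2A ->]].
  by exists (u1, u2) => //; rewrite inE u1A u2A.
rewrite card_in_imset ?cardsX //.
move=> [S1 S2] [S1' S2']; rewrite !inE /= => /andP [/imsetP [u1 u1A ->] /imsetP [u2 u2A ->]].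
move=> /andP [/imsetP [v1 v1A ->] /imsetP [v2 v2A ->]] e.
have [] := setX_inj (x1 := u1) (x2 := u2) (y1 := v1) (y2 := v2) _ _ _ _ e.
- by rewrite inE u1A r1.
- by rewrite inE u2A r2.
- by rewrite inE v1A r1.
- by rewrite inE v2A r2.
by move=> -> ->.
Qed.

Lemma modE3 n x y z : (x * y + z) %% n = ((x %% n) * (y %% n) + z %% n) %% n.
Proof. by symmetry; rewrite modnDmr -modnDml modnMm modnDml. Qed.

Definition P3 n a b b' c d := a * d + b' == c * b + d %[mod n].

Lemma P3E n a b b' c d :
  P3 n a b b' c d = P3 n (a %% n) (b %% n) (b' %% n) (c %% n) (d %% n).
Proof.
by rewrite /P3 (modE3 n a) (modE3 n c) (modE3 n (a %% n)) (modE3 n (c %% n)) !modn_mod.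
Qed.

Lemma P3_crt m1 m2 a b b' c d : coprime m1 m2 ->
  P3 (m1 * m2) a b b' c d = P3 m1 a b b' c d && P3 m2 a b b' c d.
Proof. by move=> co; rewrite /P3 chinese_remainder. Qed.

Definition Q n a b := (a * a == 1 %[mod n]) && (a * b + b == 0 %[mod n]).

Lemma QE n a b : Q n a b = Q n (a %% n) (b %% n).
Proof. by rewrite /Q modnMm -modE3 modE3. Qed.

Lemma Q_crt m1 m2 a b : coprime m1 m2 -> Q (m1 * m2) a b = Q m1 a b && Q m2 a b.
Proof. by move=> co; rewrite /Q !chinese_remainder // andbACA. Qed.

Lemma IPE m (p : 'I_m * 'I_m) : (p \in IP m) = coprime p.1 m && Q m p.1 p.2.
Proof. by rewrite inE. Qed.

Lemma ERE m (p q : 'I_m * 'I_m) : ER m p q =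
  (q.1 == p.1) && [exists c : 'I_m, exists d : 'I_m, coprime c m && P3 m p.1 p.2 q.2 c d].
Proof. by []. Qed.

Lemma cnt_mul m1 m2 : 0 < m1 -> 0 < m2 -> coprime m1 m2 ->
  cnt (IP (m1 * m2)) (ER (m1 * m2)) = cnt (IP m1) (ER m1) * cnt (IP m2) (ER m2).
Proof.
move=> H1 H2 co; have H : 0 < m1 * m2 by rewrite muln_gt0 H1.
pose r1 x : 'I_m1 := Ordinal (ltn_pmod x H1).
pose r2 x : 'I_m2 := Ordinal (ltn_pmod x H2).
pose r x : 'I_(m1 * m2) := Ordinal (ltn_pmod x H).
pose h (p : 'I_(m1 * m2) * 'I_(m1 * m2)) := ((r1 p.1, r1 p.2), (r2 p.1, r2 p.2)).
have ml x : x %% (m1 * m2) %% m1 = x %% m1 by rewrite modn_dvdm // dvdn_mulr.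
have mr x : x %% (m1 * m2) %% m2 = x %% m2 by rewrite modn_dvdm // dvdn_mull.
have chl x y : chinese m1 m2 x y %% m1 = x %% m1 := chinese_modl co x y.
have chr x y : chinese m1 m2 x y %% m2 = y %% m2 := chinese_modr co x y.
have eqo (x y : 'I_(m1 * m2)) : (x == y) = (x %% m1 == y %% m1) && (x %% m2 == y %% m2).
  by rewrite -chinese_remainder // !modn_small.
apply: (cnt_prod (h := h)).
- move=> [a b] [c d] _ _ [e1 e2 e3 e4].
  by congr pair; apply/eqP; rewrite eqo ?e1 ?e2 ?e3 ?e4 !eqxx.
- apply/setP => [[u1 u2]]; apply/imsetP/idP.
    move=> [[a b]]; rewrite IPE /= => /andP [ca qa] ->.
    rewrite inE /= !IPE /= !coprime_modl -QE -(QE m2).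
    by move: ca qa; rewrite coprimeMr Q_crt // => /andP [-> ->] /andP [-> ->].
  rewrite inE /= !IPE => /andP [/andP [c1 q1] /andP [c2 q2]].
  exists (r (chinese m1 m2 u1.1 u2.1), r (chinese m1 m2 u1.2 u2.2)).
    rewrite IPE /= coprime_modl -QE coprimeMr Q_crt //.
    rewrite -(coprime_modl _ m1) -(coprime_modl _ m2) QE (QE m2) !chl !chr.
    by rewrite coprime_modl coprime_modl c1 c2 -QE -(QE m2) q1 q2.
  case: u1 u2 {c1 q1 c2 q2} => [x1 y1] [x2 y2].
  by congr (pair (pair _ _) (pair _ _)); apply/val_inj; rewrite /= ?ml ?mr ?chl ?chr modn_small.
- move=> [a b] _; rewrite ERE eqxx /=; apply/existsP; exists (Ordinal (ltn_pmod 1 H1)).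
  apply/existsP; exists (Ordinal (ltn_pmod 0 H1)); rewrite /= coprime_modl coprime1n /=.
  by rewrite P3E !modn_mod mod0n /P3 muln0 add0n addn0 modnMm mul1n modn_mod.
- move=> [a b] _; rewrite ERE eqxx /=; apply/existsP; exists (Ordinal (ltn_pmod 1 H2)).
  apply/existsP; exists (Ordinal (ltn_pmod 0 H2)); rewrite /= coprime_modl coprime1n /=.
  by rewrite P3E !modn_mod mod0n /P3 muln0 add0n addn0 modnMm mul1n modn_mod.
move=> [a b] [a' b'] _ _; rewrite !ERE /= andbACA; congr andb.
  by rewrite eqo -!val_eqE /=.
apply/existsP/andP.
  move=> [c /existsP [d /andP [cc p3]]]; move: p3; rewrite P3_crt // => /andP [p1 p2].
  move: cc; rewrite coprimeMr => /andP [cc1 cc2]; split.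
    apply/existsP; exists (r1 c); apply/existsP; exists (r1 d).
    by rewrite /= coprime_modl cc1 -P3E.
  apply/existsP; exists (r2 c); apply/existsP; exists (r2 d).
  by rewrite /= coprime_modl cc2 -P3E.
move=> [/existsP [c1 /existsP [d1 /andP [cc1 p1]]] /existsP [c2 /existsP [d2 /andP [cc2 p2]]]].
exists (r (chinese m1 m2 c1 c2)); apply/existsP; exists (r (chinese m1 m2 d1 d2)).
rewrite /= coprime_modl coprimeMr -(coprime_modl _ m1) -(coprime_modl _ m2) !chl !chr.
rewrite !coprime_modl cc1 cc2 /= P3E !modn_mod -P3E P3_crt //.
move: p1 p2 => /= p1 p2; rewrite P3E !modn_mod in p1; rewrite P3E !modn_mod in p2.
by rewrite P3E (P3E m2) !chl !chr p1 p2.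
Qed.

Lemma modeq_add n x y t : x = y + t * n -> x = y %[mod n].
Proof. by move->; rewrite addnC modnMDl. Qed.

Lemma modeq_ex n x y : x = y %[mod n] -> exists s t, x + s * n = y + t * n.
Proof.
move=> e; exists (y %/ n), (x %/ n).
by rewrite {1}(divn_eq x n) {2}(divn_eq y n) e; lia.
Qed.

Lemma classE m a b a' b' : 0 < m ->
  lam m a' b' \in (lam m a b ^: Hol m)%g ->
  (lam m a' b' ^: Hol m)%g = (lam m a b ^: Hol m)%g.
Proof. by move=> m0; apply: (@class_eqP _ (Group (Hol_gs m0))). Qed.

Lemma rep_in m a b : 0 < m -> coprime a m -> Q m a b ->
  (lam m a b ^: Hol m)%g \in inv_classes m.
Proof.
move=> m0 ca q; apply/imsetP; exists (lam m a b) => //.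
by rewrite inE Hol_lam // lam_sqr.
Qed.

Lemma inv_classes_in m C : 0 < m -> C \in inv_classes m ->
  exists a b : 'I_m, [/\ coprime a m, Q m a b & C = (lam m a b ^: Hol m)%g].
Proof.
move=> m0 /imsetP [x]; rewrite inE => /andP [/HolP [a [b [ca ->]]]].
by rewrite lam_sqr // => q ->; exists a, b.
Qed.

Lemma ncl m a b a' b' : 0 < m -> coprime a m -> coprime a' m ->
  ~ (a' = a %[mod m] /\ exists c d, coprime c m /\ a * d + b' = c * b + d %[mod m]) ->
  ((lam m a b ^: Hol m)%g == (lam m a' b' ^: Hol m)%g) = false.
Proof.
move=> m0 ca ca' N; apply/negbTE/eqP => e; apply: N.
by apply: class_elim => //; rewrite e; exact: (class_refl (Group (Hol_gs m0))).
Qed.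

Lemma small_dvd m x : x < m -> m %| x -> x = 0.
Proof. by case: x => // x lt; rewrite gtnNdvd. Qed.

Lemma pk_ge p k : prime p -> 0 < k -> p <= p ^ k.
Proof. by move=> pp k0; rewrite -{1}(expn1 p) leq_pexp2l // prime_gt0. Qed.

Lemma part1_cls p k (a b : 'I_(p ^ k)) : prime p -> 2 < p -> 0 < k ->
  coprime a (p ^ k) -> Q (p ^ k) a b -> (a = 1 :> nat /\ b = 0 :> nat) \/ a + 1 = p ^ k.
Proof.
move=> pp p2 k0 ca /andP [q1 q2].
have mp := pk_ge pp k0.
have a0 : 0 < a.
  move: ca; case: (nat_of_ord a) => // ; rewrite /coprime gcd0n => /eqP e; lia.
have E : a * a - 1 = (a - 1) * (a + 1) by nia.
rewrite eqn_mod_dvd ?muln_gt0 ?a0 // E in q1.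
have cop x : coprime (p ^ k) x = ~~ (p %| x) by rewrite coprime_pexpl // prime_coprime.
case: (boolP (p %| a - 1)) => h.
  have np : ~~ (p %| a + 1).
    apply/negP => h2; have := dvdn_sub h2 h.
    rewrite (_ : a + 1 - (a - 1) = 2); last by lia.
    by move/(dvdn_leq (isT : 0 < 2)); lia.
  move: q1; rewrite Gauss_dvdl ?cop // => /(small_dvd _) h1.
  have a1 : (a : nat) = 1 by have := h1 (leq_ltn_trans (leq_subr 1 a) (ltn_ord a)); lia.
  left; split => //; move: q2; rewrite a1 mul1n mod0n -/(dvdn _ _) addnn -muln2.
  rewrite Gauss_dvdl ?cop; last by apply/negP => /(dvdn_leq (isT : 0 < 2)); lia.
  by move/(small_dvd (ltn_ord b)).
right; move: q1; rewrite Gauss_dvdr ?cop // => /(dvdn_leq (_ : 0 < a + 1)); rewrite addn1 => /(_ isT).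
by have := ltn_ord a; lia.
Qed.

Lemma part1 p k : prime p -> 2 < p -> 0 < k ->
  inv_classes (p ^ k) =
    [set (lam (p ^ k) 1 0 ^: Hol (p ^ k))%g; (lam (p ^ k) (p ^ k).-1 0 ^: Hol (p ^ k))%g]
  /\ #|inv_classes (p ^ k)| = 2.
Proof.
move=> pp p2 k0.
have cls := part1_cls pp p2 k0.
have mp := pk_ge pp k0.
have op : odd p by case: (even_prime pp) => // e; lia.
have om : odd (p ^ k) by rewrite oddX op orbT.
move: cls mp om; set m := p ^ k => cls mp om.
have m0 : 0 < m by lia.
pose g := m./2.
have Em : m = 2 * g + 1 by have := odd_double_half m; rewrite om -muln2; lia.
have g0 : 0 < g by lia.
have cm1 : coprime m.-1 m := coprimePn m0.
have Qr1 : Q m 1 0 by rewrite /Q mul1n muln0 !eqxx.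
have Qr2 : Q m m.-1 0.
  rewrite /Q muln0 add0n eqxx andbT; apply/eqP; apply: (modeq_add (t := m - 2)).
  rewrite Em; nia.
have Ne : ((lam m 1 0 ^: Hol m)%g == (lam m m.-1 0 ^: Hol m)%g) = false.
  apply: ncl => //; first exact: coprime1n.
  by case=> e _; move: e; rewrite !modn_small; lia.
have E : inv_classes m = [set (lam m 1 0 ^: Hol m)%g; (lam m m.-1 0 ^: Hol m)%g].
  apply/setP => C; rewrite !inE; apply/idP/idP.
    move/(inv_classes_in m0) => [a [b [ca q ->]]].
    case: (cls a b ca q) => [[a1 b0]|a1].
      by rewrite a1 b0 eqxx.
    have -> : (a : nat) = m.-1 by lia.
    rewrite (classE m0 (class_intro (b := 0) (d := b * (g + 1)) m0 cm1 (coprime1n m) _)) ?eqxx ?orbT //.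
    apply: (modeq_add (t := b * g)); move: (nat_of_ord b) => x; rewrite Em; nia.
  by case/orP => /eqP ->; apply: rep_in => //; exact: coprime1n.
by split => //; rewrite E cards2 Ne.
Qed.

Lemma card6 (T : finType) (x1 x2 x3 x4 x5 x6 : T) :
  (x2 == x1) = false -> (x3 == x1) = false -> (x3 == x2) = false ->
  (x4 == x1) = false -> (x4 == x2) = false -> (x4 == x3) = false ->
  (x5 == x1) = false -> (x5 == x2) = false -> (x5 == x3) = false -> (x5 == x4) = false ->
  (x6 == x1) = false -> (x6 == x2) = false -> (x6 == x3) = false -> (x6 == x4) = false -> (x6 == x5) = false ->
  #|[set x1; x2; x3; x4; x5; x6]| = 6.
Proof.
move=> h21 *; rewrite [in X in #|X|]setUC cardsU1 [in X in #|X|]setUC cardsU1 [in X in #|X|]setUC cardsU1 [in X in #|X|]setUC cardsU1 cardsU1 cards1.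
rewrite !inE; repeat match goal with H : (_ == _) = false |- _ => rewrite H; clear H end.
by rewrite eq_sym h21.
Qed.

Lemma card4 (T : finType) (x1 x2 x3 x4 : T) :
  (x2 == x1) = false -> (x3 == x1) = false -> (x3 == x2) = false ->
  (x4 == x1) = false -> (x4 == x2) = false -> (x4 == x3) = false ->
  #|[set x1; x2; x3; x4]| = 4.
Proof.
move=> h21 *; rewrite [in X in #|X|]setUC cardsU1 [in X in #|X|]setUC cardsU1 cardsU1 cards1.
rewrite !inE; repeat match goal with H : (_ == _) = false |- _ => rewrite H; clear H end.
by rewrite eq_sym h21.
Qed.

Lemma cop2l n x : 0 < n -> coprime (2 ^ n) x = odd x.
Proof. by move=> n0; rewrite coprime_pexpl // coprime2n. Qed.

Lemma cop8 s x : coprime x (8 * 2 ^ s) = odd x.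
Proof.
have -> : 8 * 2 ^ s = 2 ^ (s + 3) by rewrite expnD mulnC.
by rewrite coprime_sym cop2l // addn3.
Qed.

Lemma tlt t d n : 0 < d -> t * d < n * d -> t < n.
Proof. by move=> d0; rewrite ltn_pmul2r. Qed.

Lemma tle t d n : 0 < d -> t * d <= n * d -> t <= n.
Proof. by move=> d0; rewrite leq_pmul2r. Qed.

Lemma part4_cls s (a b : 'I_(8 * 2 ^ s)) : coprime a (8 * 2 ^ s) -> Q (8 * 2 ^ s) a b ->
  [\/ (a = 1 :> nat /\ (b = 0 :> nat \/ b = 4 * 2 ^ s :> nat)),
      a + 1 = 8 * 2 ^ s,
      (a + 1 = 4 * 2 ^ s /\ ~~ odd b)
    | (a = 4 * 2 ^ s + 1 :> nat /\ (b = 0 :> nat \/ b = 4 * 2 ^ s :> nat))].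
Proof.
move=> ca /andP [q1 q2].
have alt := ltn_ord a; have blt := ltn_ord b.
move: ca q1 q2 alt blt; move: (nat_of_ord a) (nat_of_ord b) => {}a {}b.
have r0 : 0 < 2 ^ s by rewrite expn_gt0.
have e1 : 2 * 2 ^ s = 2 ^ s.+1 by rewrite expnS.
have e2 : 4 * 2 ^ s = 2 ^ s.+2 by rewrite !expnS mulnA.
move: e1 e2 r0; set r := 2 ^ s => e1 e2 r0.
rewrite cop8 => oa q1 q2 alt blt.
pose j := a./2.
have Ea : a = 2 * j + 1 by have := odd_double_half a; rewrite oa -muln2; lia.
have q2' : 8 * r %| (a + 1) * b.
  by move: q2; rewrite mulnDl mul1n mod0n.
have E0 : a * a = 4 * (j * (j + 1)) + 1 by rewrite Ea; ring.
rewrite eqn_mod_dvd in q1; last by rewrite E0 addn1.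
rewrite E0 addnK in q1.
rewrite (_ : 8 * r = 4 * (2 * r)) ?dvdn_pmul2l // in q1; last by lia.
have jlt : j < 4 * r by lia.
case: (boolP (odd j)) => oj.
  move: q1; rewrite e1 Gauss_dvdr ?cop2l // -e1 => /dvdnP [t Et].
  have : t <= 2 by apply: (tle (d := 2 * r)); lia.
  case: t Et => [|[|[|t]]] Et // _; first by lia.
    apply: Or43; split; first by lia.
    rewrite -dvdn2; move: q2'.
    rewrite (_ : a + 1 = 4 * r); last by lia.
    by rewrite (_ : 8 * r = 4 * r * 2) ?dvdn_pmul2l // ?muln_gt0 //; lia.
  by apply: Or42; lia.
move: q1; rewrite e1 mulnC Gauss_dvdr ?cop2l ?addn1 //= ?oj // -e1 => /dvdnP [t Et].
have : t < 2 by apply: (tlt (d := 2 * r)); lia.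
case: t Et => [|[|t]] Et // _.
  apply: Or41; split; first by lia.
  move: q2'; rewrite (_ : a + 1 = 2); last by lia.
  rewrite (_ : 8 * r = 2 * (4 * r)) ?dvdn_pmul2l //; last by lia.
  case/dvdnP => u Eu; have : u < 2 by apply: (tlt (d := 4 * r)); lia.
  by case: u Eu => [|[|u]] Eu // _; lia.
apply: Or44; split; first by lia.
move: q2'; rewrite (_ : a + 1 = 2 * (2 * r + 1)); last by lia.
rewrite (_ : 8 * r = 2 * (4 * r)) -?mulnA ?dvdn_pmul2l //; last by lia.
rewrite e2 Gauss_dvdr; last by rewrite cop2l // addn1 /= oddM.
rewrite -e2.
case/dvdnP => u Eu; have : u < 2 by apply: (tlt (d := 4 * r)); lia.
by case: u Eu => [|[|u]] Eu // _; lia.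
Qed.

Lemma Lpred n : 1 < n -> n.-1 * n.-1 = 1 + (n - 2) * n.
Proof.
move=> n1; have -> : n = (n - 2) + 2 by lia.
have -> : (n - 2 + 2).-1 = n - 2 + 1 by lia.
rewrite addnK; move: (n - 2) => m; ring.
Qed.

Lemma LQ1 r : 0 < r -> (4 * r).-1 * (4 * r).-1 = 1 + (2 * r - 1) * (8 * r).
Proof.
move=> r0; have -> : r = (r - 1) + 1 by lia.
have -> : (4 * (r - 1 + 1)).-1 = 4 * (r - 1) + 3 by lia.
have -> : 2 * (r - 1 + 1) - 1 = 2 * (r - 1) + 1 by lia.
move: (r - 1) => s; ring.
Qed.

Lemma LQ2 r : (4 * r).+1 * (4 * r).+1 = 1 + (2 * r + 1) * (8 * r).
Proof. rewrite -addn1; ring. Qed.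

Lemma A1 n e : 0 < n -> n.-1 * e + 2 * e = 1 * 0 + e + e * n.
Proof.
move=> n0; have -> : n = (n - 1) + 1 by lia.
have -> : (n - 1 + 1).-1 = n - 1 by lia.
move: (n - 1) => m; ring.
Qed.

Lemma A2 n e : 0 < n -> n.-1 * e + (2 * e + 1) = 1 * 1 + e + e * n.
Proof.
move=> n0; have -> : n = (n - 1) + 1 by lia.
have -> : (n - 1 + 1).-1 = n - 1 by lia.
move: (n - 1) => m; ring.
Qed.

Lemma A3 r e : 0 < r -> (4 * r).-1 * ((2 * r + 1) * e) + 2 * e = 1 * 0 + (2 * r + 1) * e + r * e * (8 * r).
Proof.
move=> r0; have -> : r = (r - 1) + 1 by lia.
have -> : (4 * (r - 1 + 1)).-1 = 4 * (r - 1) + 3 by lia.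
move: (r - 1) => s; ring.
Qed.

Lemma oddS2 x : odd (2 * x).+1.
Proof. by rewrite /= oddM. Qed.

Lemma ncl_a m a b a' b' : 0 < m -> coprime a m -> coprime a' m -> a < m -> a' < m -> a != a' ->
  ((lam m a b ^: Hol m)%g == (lam m a' b' ^: Hol m)%g) = false.
Proof.
move=> m0 ca ca' am am' ne; apply: ncl => // -[e _]; move: e; rewrite !modn_small //.
by move=> e; move: ne; rewrite e eqxx.
Qed.

Lemma part4' s :
  let m := 8 * 2 ^ s in
  inv_classes m =
    [set (lam m 1 0 ^: Hol m)%g; (lam m 1 (4 * 2 ^ s) ^: Hol m)%g;
         (lam m m.-1 0 ^: Hol m)%g; (lam m m.-1 1 ^: Hol m)%g;
         (lam m (4 * 2 ^ s).-1 0 ^: Hol m)%g; (lam m (4 * 2 ^ s).+1 0 ^: Hol m)%g]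
  /\ #|inv_classes m| = 6.
Proof.
move=> m.
have cls := @part4_cls s.
have r0 : 0 < 2 ^ s by rewrite expn_gt0.
move: cls r0; rewrite -/m; set r := 2 ^ s => cls r0.
have Em : m = 8 * r by [].
have m0 : 0 < m by lia.
have c1 : coprime 1 m := coprime1n m.
have c3 : coprime m.-1 m := coprimePn m0.
have c5 : coprime (4 * r).-1 m.
  by rewrite cop8 (_ : (4 * r).-1 = (2 * (2 * r - 1)).+1) ?oddS2 //; lia.
have c6 : coprime (4 * r).+1 m by rewrite cop8 (_ : 4 * r = 2 * (2 * r)) ?oddS2 //; lia.
have Q1 : Q m 1 0 by rewrite /Q mul1n muln0 !eqxx.
have Q2 : Q m 1 (4 * r).
  rewrite /Q mul1n eqxx /=; apply/eqP; apply: (modeq_add (t := 1)); lia.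
have Q3 : Q m m.-1 0.
  rewrite /Q muln0 add0n eqxx andbT; apply/eqP; apply: (modeq_add (t := m - 2)).
  by rewrite Lpred //; lia.
have Q4 : Q m m.-1 1.
  rewrite /Q muln1; apply/andP; split; apply/eqP.
    by apply: (modeq_add (t := m - 2)); rewrite Lpred //; lia.
  by apply: (modeq_add (t := 1)); lia.
have Q5 : Q m (4 * r).-1 0.
  rewrite /Q muln0 add0n eqxx andbT; apply/eqP; apply: (modeq_add (t := 2 * r - 1)).
  by rewrite LQ1.
have Q6 : Q m (4 * r).+1 0.
  rewrite /Q muln0 add0n eqxx andbT; apply/eqP; apply: (modeq_add (t := 2 * r + 1)).
  by rewrite LQ2.
set X1 := (lam m 1 0 ^: Hol m)%g; set X2 := (lam m 1 (4 * r) ^: Hol m)%g.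
set X3 := (lam m m.-1 0 ^: Hol m)%g; set X4 := (lam m m.-1 1 ^: Hol m)%g.
set X5 := (lam m (4 * r).-1 0 ^: Hol m)%g; set X6 := (lam m (4 * r).+1 0 ^: Hol m)%g.
have E : inv_classes m = [set X1; X2; X3; X4; X5; X6].
  apply/setP => C; rewrite !inE; apply/idP/idP; last first.
    by case/orP => [/orP [/orP [/orP [/orP [|]|]|]|]|] /eqP ->; apply: rep_in.
  move/(inv_classes_in m0) => [a [b [ca q ->]]].
  case: (cls a b ca q) => [[a1 [b0|b0]]|a1|[a1 ob]|[a1 [b0|b0]]].
  - by rewrite /X1 a1 b0 eqxx.
  - by rewrite /X2 a1 b0 eqxx !orbT.
  - have -> : (a : nat) = m.-1 by lia.
    have := odd_double_half b; rewrite -muln2 mulnC.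
    move: (b./2) => e; case: (odd b) => /= Eb.
      rewrite (classE m0 (class_intro (b := 1) (b' := b) (d := e) m0 c3 c1 _)) ?eqxx ?orbT //.
      by apply: (modeq_add (t := e)); rewrite -Eb [1 + _]addnC A2.
    rewrite (classE m0 (class_intro (b := 0) (b' := b) (d := e) m0 c3 c1 _)) ?eqxx ?orbT //.
    by apply: (modeq_add (t := e)); rewrite -Eb add0n A1.
  - have -> : (a : nat) = (4 * r).-1 by lia.
    have := odd_double_half b; rewrite (negbTE ob) add0n -muln2 mulnC.
    move: (b./2) => e Eb.
    rewrite (classE m0 (class_intro (b := 0) (b' := b) (d := (2 * r + 1) * e) m0 c5 c1 _)) ?eqxx ?orbT //.
    by apply: (modeq_add (t := r * e)); rewrite -Eb A3.
  - by rewrite /X6 a1 b0 addn1 eqxx !orbT.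
  - have -> : (a : nat) = (4 * r).+1 by lia.
    rewrite (classE m0 (class_intro (b := 0) (b' := b) (c := 1) (d := 1) m0 c6 c1 _)) ?eqxx ?orbT //.
    by apply: (modeq_add (t := 1)); rewrite b0; lia.
split=> //; rewrite E.
have lt3 : m.-1 < m by lia.
have lt5 : (4 * r).-1 < m by lia.
have lt6 : (4 * r).+1 < m by lia.
have lt1 : 1 < m by lia.
apply: card6.
- rewrite eq_sym; apply: ncl => // -[_ [c [d [_ e]]]]; move: e.
  rewrite mul1n muln0 add0n -[X in _ = X %[mod _]]addn0 => /eqP; rewrite eqn_modDl.
  by rewrite mod0n modn_small //; lia.
- by rewrite eq_sym; apply: ncl_a => //; lia.
- by rewrite eq_sym; apply: ncl_a => //; lia.
- by rewrite eq_sym; apply: ncl_a => //; lia.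
- by rewrite eq_sym; apply: ncl_a => //; lia.
- rewrite eq_sym; apply: ncl => // -[_ [c [d [_ e]]]]; move: e.
  rewrite muln0 add0n => /modeq_ex [u [v]]; lia.
- by rewrite eq_sym; apply: ncl_a => //; lia.
- by rewrite eq_sym; apply: ncl_a => //; lia.
- by rewrite eq_sym; apply: ncl_a => //; lia.
- by rewrite eq_sym; apply: ncl_a => //; lia.
- by rewrite eq_sym; apply: ncl_a => //; lia.
- by rewrite eq_sym; apply: ncl_a => //; lia.
- by rewrite eq_sym; apply: ncl_a => //; lia.
- by rewrite eq_sym; apply: ncl_a => //; lia.
- by rewrite eq_sym; apply: ncl_a => //; lia.
Qed.

Lemma part4 k : 3 <= k ->
     inv_classes (2 ^ k) =
       [set (lam (2 ^ k) 1 0 ^: Hol (2 ^ k))%g;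
            (lam (2 ^ k) 1 (2 ^ k.-1) ^: Hol (2 ^ k))%g;
            (lam (2 ^ k) (2 ^ k).-1 0 ^: Hol (2 ^ k))%g;
            (lam (2 ^ k) (2 ^ k).-1 1 ^: Hol (2 ^ k))%g;
            (lam (2 ^ k) (2 ^ k.-1).-1 0 ^: Hol (2 ^ k))%g;
            (lam (2 ^ k) (2 ^ k.-1).+1 0 ^: Hol (2 ^ k))%g]
     /\ #|inv_classes (2 ^ k)| = 6.
Proof.
move=> k3.
have E1 : 2 ^ k.-1 = 4 * 2 ^ (k - 3).
  have -> : k.-1 = (k - 3).+2 by lia.
  by rewrite !expnS mulnA.
have E2 : 2 ^ k = 8 * 2 ^ (k - 3).
  have -> : k = (k - 3).+3 by lia.
  by rewrite !expnS !mulnA subSS subSS subSS subn0.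
rewrite E1 E2; exact: part4'.
Qed.

Lemma part2 :
  inv_classes 2 = [set (lam 2 1 0 ^: Hol 2)%g; (lam 2 1 1 ^: Hol 2)%g]
  /\ #|inv_classes 2| = 2.
Proof.
have m0 : 0 < 2 by [].
have Ne : ((lam 2 1 0 ^: Hol 2)%g == (lam 2 1 1 ^: Hol 2)%g) = false.
  by apply: ncl => // -[_ [c [d [_]]]] /modeq_ex [u [v]]; lia.
have E : inv_classes 2 = [set (lam 2 1 0 ^: Hol 2)%g; (lam 2 1 1 ^: Hol 2)%g].
  apply/setP => C; rewrite !inE; apply/idP/idP; last first.
    by case/orP => /eqP ->; apply: rep_in.
  move/(inv_classes_in m0) => [a [b [ca q ->]]].
  case: a ca q => [[|[|a]]] //= Ha ca q.
  by case: b q => [[|[|b]]] //= Hb q; rewrite eqxx ?orbT.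
by split => //; rewrite E cards2 Ne.
Qed.

Lemma part3 :
  inv_classes 4 = [set (lam 4 1 0 ^: Hol 4)%g; (lam 4 1 2 ^: Hol 4)%g;
                        (lam 4 3 0 ^: Hol 4)%g; (lam 4 3 1 ^: Hol 4)%g]
   /\ #|inv_classes 4| = 4.
Proof.
have m0 : 0 < 4 by [].
have E : inv_classes 4 = [set (lam 4 1 0 ^: Hol 4)%g; (lam 4 1 2 ^: Hol 4)%g;
                        (lam 4 3 0 ^: Hol 4)%g; (lam 4 3 1 ^: Hol 4)%g].
  apply/setP => C; rewrite !inE; apply/idP/idP; last first.
    by case/orP => [/orP [/orP [|]|]|] /eqP ->; apply: rep_in.
  move/(inv_classes_in m0) => [a [b [ca q ->]]].
  case: a ca q => [[|[|[|[|a]]]]] //= Ha ca q;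
    case: b q => [[|[|[|[|b]]]]] //= Hb q; rewrite ?eqxx ?orbT //.
    rewrite (classE m0 (class_intro (b := 0) (b' := 2) (c := 1) (d := 1) m0 _ _ _)) ?eqxx ?orbT //.
  rewrite (classE m0 (class_intro (b := 1) (b' := 3) (c := 1) (d := 1) m0 _ _ _)) ?eqxx ?orbT //.
split => //; rewrite E; apply: card4.
- by rewrite eq_sym; apply: ncl => // -[_ [c [d [_]]]] /modeq_ex [u [v]]; lia.
- by rewrite eq_sym; apply: ncl_a.
- by rewrite eq_sym; apply: ncl_a.
- by rewrite eq_sym; apply: ncl_a.
- by rewrite eq_sym; apply: ncl_a.
- by rewrite eq_sym; apply: ncl => // -[_ [c [d [_]]]] /modeq_ex [u [v]]; lia.
Qed.

Definition Nc m := cnt (IP m) (ER m).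

Lemma Nc1 : Nc 1 = 1.
Proof.
rewrite /Nc /cnt.
have -> : [set [set y in IP 1 | ER 1 x y] | x in IP 1] =
          [set [set y in IP 1 | ER 1 (ord0, ord0) y]].
  apply/setP => S; rewrite inE; apply/imsetP/eqP.
    by move=> [[x y] _ ->]; rewrite (ord1 x) (ord1 y).
  by move=> ->; exists (ord0, ord0) => //; rewrite inE.
exact: cards1.
Qed.

Lemma Nc_pk p k : prime p -> 0 < k ->
  Nc (p ^ k) = if p == 2 then two_factor k else 2.
Proof.
move=> pp k0; rewrite /Nc -inv_classes_cnt ?expn_gt0 ?prime_gt0 //.
case: eqP => [->|ne].
  rewrite /two_factor; case: k k0 => [|[|[|k]]] // _.
  - by have [] := part2.
  - by have [] := part3.
  - by have [] := part4 (isT : 3 <= k.+3); rewrite (_ : minn 6 (2 * k.+3) = 6) //; lia.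
have [] := part1 pp _ k0 => //.
by have := prime_gt1 pp; lia.
Qed.

Lemma perm_primes m' p k : prime p -> 0 < k -> 0 < m' -> coprime p m' ->
  perm_eq (primes (m' * p ^ k)) (p :: primes m').
Proof.
move=> pp k0 m0 co; apply: uniq_perm; first exact: primes_uniq.
  rewrite /= primes_uniq andbT mem_primes pp m0 /=.
  by rewrite -prime_coprime.
move=> q; rewrite primesM ?expn_gt0 ?(prime_gt0 pp) // primesX // (primes_prime pp).
by rewrite !inE orbC.
Qed.

Lemma part5 m : 0 < m ->
  #|inv_classes m| = two_factor (logn 2 m) * 2 ^ size [seq q <- primes m | 2 < q].
Proof.
move=> m0; rewrite inv_classes_cnt // -/(Nc m).
elim: m {-2}m (leqnn m) m0 => [|n IH] m lemn m0; first by case: m lemn m0.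
case: (ltngtP m 1) => [|m1|->]; first by rewrite ltnNge m0.
  pose p := pdiv m; have pp : prime p by exact: pdiv_prime.
  have k0 : 0 < logn p m by rewrite logn_gt0 mem_primes pp m0 pdiv_dvd.
  have [m' co Em] := pfactor_coprime pp m0.
  move: k0 Em; set k := logn p m => k0 Em.
  have m'0 : 0 < m' by move: m0; rewrite Em muln_gt0 => /andP [].
  have pk2 : 2 <= p ^ k by apply: leq_trans (pk_ge pp k0); exact: prime_gt1.
  have ltm : m' < m by rewrite Em -{1}(muln1 m') ltn_mul2l m'0 /=; lia.
  have lm : m' <= n by rewrite -ltnS (leq_trans ltm lemn).
  have IHm' := IH m' lm m'0.
  have cpk : coprime (p ^ k) m' by rewrite coprime_pexpl.
  rewrite Em mulnC /Nc cnt_mul ?expn_gt0 ?(prime_gt0 pp) // -/(Nc _) -/(Nc m') IHm'.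
  rewrite Nc_pk // mulnC lognM ?expn_gt0 ?(prime_gt0 pp) //.
  rewrite [p ^ k * m']mulnC (perm_size (perm_filter _ (perm_primes pp k0 m'0 co))).
  case: eqP => [e2|ne].
    move: co; rewrite e2 => co.
    rewrite pfactorK // (logn_coprime co) addn0 /=.
    by rewrite (_ : two_factor 0 = 1) // mul1n mulnC.
  have p3 : 2 < p by have := prime_gt1 pp; lia.
  have op : odd p by case: (even_prime pp).
  have c2 : coprime 2 (p ^ k) by rewrite coprime_pexpr // coprime2n.
  rewrite (logn_coprime c2) add0n /= p3 /= expnS.
  move: (two_factor _) (2 ^ _) => x y; ring.
by rewrite Nc1 /two_factor logn1.
Qed.

Theorem lemma5p3 :
  (forall p k : nat, prime p -> 2 < p -> 0 < k ->
     inv_classes (p ^ k) =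
       [set (lam (p ^ k) 1 0 ^: Hol (p ^ k))%g; (lam (p ^ k) (p ^ k).-1 0 ^: Hol (p ^ k))%g]
     /\ #|inv_classes (p ^ k)| = 2)
  /\
  (inv_classes 2 = [set (lam 2 1 0 ^: Hol 2)%g; (lam 2 1 1 ^: Hol 2)%g]
   /\ #|inv_classes 2| = 2)
  /\
  (inv_classes 4 = [set (lam 4 1 0 ^: Hol 4)%g; (lam 4 1 2 ^: Hol 4)%g;
                        (lam 4 3 0 ^: Hol 4)%g; (lam 4 3 1 ^: Hol 4)%g]
   /\ #|inv_classes 4| = 4)
  /\
  (forall k : nat, 3 <= k ->
     inv_classes (2 ^ k) =
       [set (lam (2 ^ k) 1 0 ^: Hol (2 ^ k))%g;
            (lam (2 ^ k) 1 (2 ^ k.-1) ^: Hol (2 ^ k))%g;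
            (lam (2 ^ k) (2 ^ k).-1 0 ^: Hol (2 ^ k))%g;
            (lam (2 ^ k) (2 ^ k).-1 1 ^: Hol (2 ^ k))%g;
            (lam (2 ^ k) (2 ^ k.-1).-1 0 ^: Hol (2 ^ k))%g;
            (lam (2 ^ k) (2 ^ k.-1).+1 0 ^: Hol (2 ^ k))%g]
     /\ #|inv_classes (2 ^ k)| = 6)
  /\
  (forall m : nat, 0 < m ->
     #|inv_classes m| =
       two_factor (logn 2 m) * 2 ^ size [seq q <- primes m | 2 < q]).
Proof.
split; first by move=> p k pp p2 k0; exact: part1.
split; first exact: part2.
split; first exact: part3.
split; first exact: part4.
exact: part5.
Qed.
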